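(* Let $n\ge1$, $1\le i\le n$ be integers, $\alpha,\beta>0$, $\tau\ge0$ with $i\beta(\tau+1)>\tau$. Then $$\xi^{(i)}_\tau(\alpha)=\int_0^\infty\frac{\partial}{\partial\alpha}\log f^{(i)}_{\alpha,\beta}(x)\, f^{(i)}_{\alpha,\beta}(x)^{\tau+1}\,dx=c(i,n)^{\tau+1}\left(\frac{\beta}{\alpha}\right)^{\tau+1}B\!\left(\frac{(n-i+1)\tau\beta+(n-i+1)\beta+\tau}{\beta},\frac{i\tau\beta+i\beta-\tau}{\beta}\right)\left(\frac{-\tau}{\beta+\tau\beta}\right),$$ and $K^{(i)}_\tau(\alpha)=J^{(i)}_{2\tau}(\alpha)-\xi^{(i)}_\tau(\alpha)^2$.
   Context: $c(i,n)=\frac{n!}{(n-i)!(i-1)!}$ and $f^{(i)}_{\alpha,\beta}(x)=\frac{c(i,n)\beta (x/\alpha)^{i\beta-1}}{\alpha(1+(x/\alpha)^\beta)^{n+1}}$, $x>0$, is the density of the $i$-th order statistic of a sample of size $n$ from the log-logistic distribution with scale $\alpha$ and shape $\beta$. Derivatives are with respect to $\alpha$ with $\beta$ known. $J^{(i)}_\tau(\alpha)=\int_0^\infty(\partial_\alpha\log f^{(i)}_{\alpha,\beta})^2 (f^{(i)}_{\alpha,\beta})^{\tau+1}dx$, and $K^{(i)}_\tau(\alpha)$ denotes the quantity $J^{(i)}_{2\tau}(\alpha)-\xi^{(i)}_\tau(\alpha)^2$. $B$ is the Beta function. *)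

(* Defs.v *)
From Stdlib Require Import Reals Factorial.
From Coquelicot Require Import Coquelicot.
Open Scope R_scope.

Definition c_coef (i n : nat) : R :=
  INR (fact n) / (INR (fact (n - i)) * INR (fact (i - 1))).

(* density of the i-th order statistic of a log-logistic(alpha, beta) sample of size n, x > 0 *)
Definition f_os (n i : nat) (alpha beta x : R) : R :=
  c_coef i n * beta * Rpower (x / alpha) (INR i * beta - 1)
  / (alpha * Rpower (1 + Rpower (x / alpha) beta) (INR n + 1)).

Definition score (n i : nat) (alpha beta x : R) : R :=
  Derive (fun a => ln (f_os n i a beta x)) alpha.

Definition Beta (a b : R) : R :=
  RInt_gen (fun t => Rpower t (a - 1) * Rpower (1 - t) (b - 1))
    (at_right 0) (at_left 1).

Definition xi_integrand (n i : nat) (alpha beta tau x : R) : R :=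
  score n i alpha beta x * Rpower (f_os n i alpha beta x) (tau + 1).

Definition J_integrand (n i : nat) (alpha beta tau x : R) : R :=
  (score n i alpha beta x) ^ 2 * Rpower (f_os n i alpha beta x) (tau + 1).

Definition xi (n i : nat) (alpha beta tau : R) : R :=
  RInt_gen (xi_integrand n i alpha beta tau) (at_right 0) (Rbar_locally p_infty).

Definition J (n i : nat) (alpha beta tau : R) : R :=
  RInt_gen (J_integrand n i alpha beta tau) (at_right 0) (Rbar_locally p_infty).

Definition K (n i : nat) (alpha beta tau : R) : R :=
  J n i alpha beta (2 * tau) - (xi n i alpha beta tau) ^ 2.

(* Main.v *)
Require Import Defs.
From Stdlib Require Import Reals Lra Factorial.
From Coquelicot Require Import Coquelicot.
Open Scope R_scope.


Definition vb p q s := Rpower s (p-1) * Rpower (1-s) (q-1).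
Definition Vb p q s := Rpower s p * Rpower (1-s) q.

Lemma exp_m1 (e y : R) : 0 < y -> exp ((e - 1) * ln y) = exp (e * ln y) / y.
Proof.
  intros Hy. replace ((e-1) * ln y) with (e * ln y + - ln y) by ring.
  rewrite exp_plus, exp_Ropp, exp_ln by lra. field. lra.
Qed.

Lemma vb_cont p q s : 0 < s < 1 -> continuous (vb p q) s.
Proof.
  intros Hs. apply (@ex_derive_continuous R_AbsRing R_NormedModule). unfold vb, Rpower.
  auto_derive. lra.
Qed.

Lemma Vb_deriv p q s : 0 < s < 1 ->
  is_derive (Vb p q) s (vb p q s * (p*(1-s) - q*s)).
Proof.
  intros Hs. unfold Vb, vb, Rpower.
  auto_derive. lra.
  rewrite !exp_m1 by lra. replace (1 + - s) with (1 - s) by ring. field. lra.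
Qed.


Lemma ballR x e y : Rabs (y - x) < e -> ball x e y.
Proof. intros H. exact H. Qed.
Lemma ballR' x e y : ball x e y -> Rabs (y - x) < e.
Proof. intros H. exact H. Qed.

Lemma rpow_pos y p : 0 < Rpower y p.
Proof. apply exp_pos. Qed.

Lemma rpow_small p y eps : 0 < p -> 0 < y -> 0 < eps -> y < exp (ln eps / p) -> Rpower y p < eps.
Proof.
  intros Hp Hy He Hl. unfold Rpower.
  apply ln_increasing in Hl; [|lra]. rewrite ln_exp in Hl.
  rewrite <- (exp_ln eps) by lra. apply exp_increasing.
  apply Rmult_lt_compat_l with (r := p) in Hl; [|lra].
  replace (p * (ln eps / p)) with (ln eps) in Hl by (field; lra). lra.
Qed.

Lemma rpow_le1 q y : 0 < q -> 0 < y <= 1 -> Rpower y q <= 1.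
Proof.
  intros Hq Hy. unfold Rpower. rewrite <- exp_0.
  assert (ln y <= 0). { rewrite <- ln_1. destruct (Req_dec y 1). subst; lra.
   left. apply ln_increasing; lra. }
  destruct (Req_dec (q * ln y) 0) as [E|E]. rewrite E; lra.
  left. apply exp_increasing. nra.
Qed.

Lemma Vb_small p q : 0 < p -> 0 < q -> forall eps, 0 < eps ->
  exists d, 0 < d /\ forall y, 0 < y < d -> Rabs (Vb p q y) < eps.
Proof.
  intros Hp Hq eps He.
  exists (Rmin (1/2) (exp (ln eps / p))). split.
  { apply Rmin_pos. lra. apply exp_pos. }
  intros y [Hy Hd].
  assert (H1 : y < 1/2) by (eapply Rlt_le_trans; [apply Hd| apply Rmin_l]).
  assert (H2 : y < exp (ln eps / p)) by (eapply Rlt_le_trans; [apply Hd| apply Rmin_r]).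
  unfold Vb. rewrite Rabs_pos_eq.
  2: { apply Rmult_le_pos; left; apply rpow_pos. }
  pose proof (rpow_small p y eps Hp Hy He H2).
  pose proof (rpow_le1 q (1-y) Hq ltac:(lra)).
  pose proof (rpow_pos y p). pose proof (rpow_pos (1-y) q). nra.
Qed.

Lemma Vb_sym p q y : Vb p q (1 - y) = Vb q p y.
Proof. unfold Vb. replace (1 - (1 - y)) with y by ring. apply Rmult_comm. Qed.
Lemma vb_sym p q y : vb p q (1 - y) = vb q p y.
Proof. unfold vb. replace (1 - (1 - y)) with y by ring. apply Rmult_comm. Qed.

Lemma Vb_lim0 p q : 0 < p -> 0 < q -> filterlim (Vb p q) (at_right 0) (locally 0).
Proof.
  intros Hp Hq P [eps Heps].
  destruct (Vb_small p q Hp Hq eps (cond_pos eps)) as [d [Hd H]].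
  exists (mkposreal d Hd). intros y Hy Hy0. apply Heps. apply ballR.
  apply ballR' in Hy. simpl in Hy. rewrite Rminus_0_r in *.
  rewrite Rabs_pos_eq in Hy by lra. apply H. lra.
Qed.

Lemma Vb_lim1 p q : 0 < p -> 0 < q -> filterlim (Vb p q) (at_left 1) (locally 0).
Proof.
  intros Hp Hq P [eps Heps].
  destruct (Vb_small q p Hq Hp eps (cond_pos eps)) as [d [Hd H]].
  exists (mkposreal d Hd). intros y Hy Hy0. apply Heps. apply ballR.
  apply ballR' in Hy. simpl in Hy. rewrite Rminus_0_r in *.
  rewrite Rabs_minus_sym, Rabs_pos_eq in Hy by lra.
  replace y with (1 - (1 - y)) by ring. rewrite Vb_sym. apply H. lra.
Qed.


Lemma ex_RInt_vb p q a b : 0 < a < 1 -> 0 < b < 1 -> ex_RInt (vb p q) a b.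
Proof.
  intros Ha Hb. apply (@ex_RInt_continuous R_CompleteNormedModule). intros z [H1 H2].
  apply vb_cont. split.
  - eapply Rlt_le_trans; [|apply H1]. apply Rmin_glb_lt; lra.
  - eapply Rle_lt_trans; [apply H2|]. apply Rmax_lub_lt; lra.
Qed.



Lemma vb_bound p q s : 0 < s <= 1/2 ->
  0 <= vb p q s <= exp (Rabs (q-1) * ln 2) * Rpower s (p-1).
Proof.
  intros Hs. unfold vb. split.
  { apply Rmult_le_pos; left; apply rpow_pos. }
  rewrite (Rmult_comm (Rpower s _)). apply Rmult_le_compat_r. left; apply rpow_pos.
  unfold Rpower.
  assert (Hl1 : ln (1 - s) <= 0).
  { rewrite <- ln_1. destruct (Req_dec s 0); [lra|]. left; apply ln_increasing; lra. }
  assert (Hl2 : - ln 2 <= ln (1 - s)).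
  { assert (ln (1/2) = - ln 2). { unfold Rdiv. rewrite Rmult_1_l, ln_Rinv by lra. ring. }
    rewrite <- H. destruct (Req_dec s (1/2)). subst. right. f_equal. field.
    left. apply ln_increasing; lra. }
  assert ((q-1) * ln (1-s) <= Rabs (q-1) * ln 2).
  { eapply Rle_trans. apply Rle_abs. rewrite Rabs_mult. apply Rmult_le_compat_l. apply Rabs_pos.
    rewrite Rabs_left1 by lra. lra. }
  destruct H. left; apply exp_increasing; lra. rewrite H; lra.
Qed.

Lemma is_RInt_pow M p a b : 0 < p -> 0 < a -> 0 < b ->
  is_RInt (fun s => M * Rpower s (p-1)) a b (M * (Rpower b p - Rpower a p) / p).
Proof.
  intros Hp Ha Hb.
  replace (M * (Rpower b p - Rpower a p) / p) with
     (minus ((fun s => M * Rpower s p / p) b) ((fun s => M * Rpower s p / p) a))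
     by (unfold minus, plus, opp; simpl; field; lra).
  assert (Hm : 0 < Rmin a b) by (apply Rmin_pos; lra).
  apply (@is_RInt_derive R_CompleteNormedModule (fun s => M * Rpower s p / p)).
  - intros x [Hx _]. unfold Rpower. auto_derive. lra.
    rewrite exp_m1 by lra. field. lra.
  - intros x [Hx _]. apply (@ex_derive_continuous R_AbsRing R_NormedModule).
    unfold Rpower. auto_derive. lra.
Qed.

Lemma left_tail p q : 0 < p -> forall eps, 0 < eps ->
  exists d, 0 < d <= 1/2 /\ forall a a', 0 < a < d -> 0 < a' < d ->
    Rabs (RInt (vb p q) a a') < eps.
Proof.
  intros Hp eps He.
  set (M := exp (Rabs (q-1) * ln 2)).
  assert (HM : 0 < M) by apply exp_pos.
  set (t := eps * p / M).
  assert (Ht : 0 < t) by (unfold t; apply Rdiv_lt_0_compat; nra).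
  exists (Rmin (1/2) (exp (ln t / p))). split.
  { split. apply Rmin_pos. lra. apply exp_pos. apply Rmin_l. }
  assert (key : forall a a', 0 < a < Rmin (1/2) (exp (ln t / p)) -> 0 < a' < Rmin (1/2) (exp (ln t / p)) -> a <= a' ->
    Rabs (RInt (vb p q) a a') < eps).
  { intros a a' Ha Ha' Hle.
    assert (Hd1 : Rmin (1/2) (exp (ln t / p)) <= 1/2) by apply Rmin_l.
    assert (Hd2 : Rmin (1/2) (exp (ln t / p)) <= exp (ln t / p)) by apply Rmin_r.
    assert (Hex : ex_RInt (vb p q) a a') by (apply ex_RInt_vb; lra).
    assert (H0 : 0 <= RInt (vb p q) a a').
    { apply RInt_ge_0; auto. intros x Hx. apply (vb_bound p q x). lra. }
    assert (H1 : RInt (vb p q) a a' <= RInt (fun s => M * Rpower s (p-1)) a a').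
    { apply RInt_le; auto. eexists; apply is_RInt_pow; lra.
      intros x Hx. apply (vb_bound p q x). lra. }
    rewrite (is_RInt_unique _ _ _ _ (is_RInt_pow M p a a' Hp ltac:(lra) ltac:(lra))) in H1.
    pose proof (rpow_small p a' t Hp ltac:(lra) Ht ltac:(lra)).
    pose proof (rpow_pos a p).
    rewrite Rabs_pos_eq by lra.
    eapply Rle_lt_trans. apply H1.
    apply Rmult_lt_reg_r with p. lra. unfold Rdiv. rewrite Rmult_assoc, Rinv_l, Rmult_1_r by lra.
    assert (M * (Rpower a' p - Rpower a p) < M * t) by (apply Rmult_lt_compat_l; lra).
    unfold t in H3. replace (M * (eps * p / M)) with (eps * p) in H3 by (field; lra). lra. }
  intros a a' Ha Ha'. pose proof (Rmin_l (1/2) (exp (ln t / p))). destruct (Rle_or_lt a a').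
  - apply key; auto.
  - rewrite <- opp_RInt_swap by (apply ex_RInt_vb; lra).
    unfold opp; simpl. rewrite Rabs_Ropp. apply key; auto; lra.
Qed.


Lemma right_tail p q : 0 < q -> forall eps, 0 < eps ->
  exists d, 0 < d <= 1/2 /\ forall b b', 1 - d < b < 1 -> 1 - d < b' < 1 ->
    Rabs (RInt (vb p q) b' b) < eps.
Proof.
  intros Hq eps He. destruct (left_tail q p Hq eps He) as [d [Hd H]].
  exists d. split; auto. intros b b' Hb Hb'.
  pose proof (RInt_comp_lin (V := R_CompleteNormedModule) (vb p q) (-1) 1 (1-b') (1-b)) as E.
  replace (-1 * (1 - b') + 1) with b' in E by ring.
  replace (-1 * (1 - b) + 1) with b in E by ring.
  rewrite <- E by (apply ex_RInt_vb; lra).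
  rewrite (RInt_ext _ (fun y => opp (vb q p y))).
  2:{ intros x _. unfold scal, opp; simpl. unfold mult; simpl.
      replace (-1 * x + 1) with (1 - x) by ring. rewrite vb_sym. ring. }
  rewrite (RInt_opp (V:=R_CompleteNormedModule)) by (apply ex_RInt_vb; lra). unfold opp; simpl.
  rewrite Rabs_Ropp. apply H; lra.
Qed.

Lemma beta_lim p q : 0 < p -> 0 < q ->
  filterlim (fun ab => RInt (vb p q) (fst ab) (snd ab))
    (filter_prod (at_right 0) (at_left 1)) (locally (Beta p q)).
Proof.
  intros Hp Hq.
  assert (Hex : exists y, filterlim (fun ab => RInt (vb p q) (fst ab) (snd ab))
    (filter_prod (at_right 0) (at_left 1)) (locally y)).
  { apply (filterlim_locally_cauchy (U := R_CompleteSpace)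
       (F := filter_prod (at_right 0) (at_left 1))).
    intros eps.
    destruct (left_tail p q Hp (eps/2)) as [d1 [Hd1 H1]]. { destruct eps; simpl; lra. }
    destruct (right_tail p q Hq (eps/2)) as [d2 [Hd2 H2]]. { destruct eps; simpl; lra. }
    exists (fun ab => 0 < fst ab < d1 /\ 1 - d2 < snd ab < 1). split.
    - apply Filter_prod with (Q := fun a => 0 < a < d1) (R := fun b => 1 - d2 < b < 1).
      + exists (mkposreal d1 ltac:(lra)). intros y Hy Hy0. apply ballR' in Hy. simpl in Hy.
        rewrite Rminus_0_r, Rabs_pos_eq in Hy by lra. lra.
      + exists (mkposreal d2 ltac:(lra)). intros y Hy Hy0. apply ballR' in Hy. simpl in Hy.
        rewrite Rabs_minus_sym, Rabs_pos_eq in Hy by lra. lra.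
      + intros x y Hx Hy; simpl; auto.
    - intros [a b] [a' b'] [Ha Hb] [Ha' Hb']. simpl in *. apply ballR.
      pose proof (RInt_Chasles (V := R_CompleteNormedModule) (vb p q) a a' b
                   ltac:(apply ex_RInt_vb; lra) ltac:(apply ex_RInt_vb; lra)) as C1.
      pose proof (RInt_Chasles (V := R_CompleteNormedModule) (vb p q) a' b' b
                   ltac:(apply ex_RInt_vb; lra) ltac:(apply ex_RInt_vb; lra)) as C2.
      unfold plus in C1, C2; simpl in C1, C2.
      pose proof (H1 a a' ltac:(lra) ltac:(lra)).
      pose proof (H2 b b' ltac:(lra) ltac:(lra)).
      replace (RInt (vb p q) a' b' - RInt (vb p q) a b)
        with (- (RInt (vb p q) a a' + RInt (vb p q) b' b)) by lra.
      rewrite Rabs_Ropp. eapply Rle_lt_trans. apply Rabs_triang.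
      destruct eps; simpl in *; lra. }
  destruct Hex as [y Hy].
  replace (Beta p q) with y. exact Hy.
  symmetry. unfold Beta.
  apply (is_RInt_gen_unique (V := R_CompleteNormedModule)).
  change (fun t => Rpower t (p - 1) * Rpower (1 - t) (q - 1)) with (vb p q).
  apply filterlimi_lim_ext_loc with (f := fun ab => RInt (vb p q) (fst ab) (snd ab)).
  - apply Filter_prod with (Q := fun a => 0 < a < 1) (R := fun b => 0 < b < 1).
    + exists (mkposreal 1 ltac:(lra)). intros z Hz Hz0. apply ballR' in Hz. simpl in Hz.
      rewrite Rminus_0_r, Rabs_pos_eq in Hz by lra. lra.
    + exists (mkposreal 1 ltac:(lra)). intros z Hz Hz0. apply ballR' in Hz. simpl in Hz.
      rewrite Rabs_minus_sym, Rabs_pos_eq in Hz by lra. lra.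
    + intros a b Ha Hb. simpl. apply (RInt_correct (V := R_CompleteNormedModule)).
      apply ex_RInt_vb; lra.
  - exact Hy.
Qed.


Lemma c_pos i n : 0 < c_coef i n.
Proof.
  unfold c_coef. apply Rdiv_lt_0_compat. apply INR_fact_lt_0.
  apply Rmult_lt_0_compat; apply INR_fact_lt_0.
Qed.

Definition Lam n i a beta x :=
  ln (c_coef i n) + ln beta + (INR i * beta - 1) * (ln x - ln a) - ln a
  - (INR n + 1) * ln (1 + exp (beta * (ln x - ln a))).

Lemma f_os_exp n i a beta x : 0 < a -> 0 < beta -> 0 < x ->
  f_os n i a beta x = exp (Lam n i a beta x).
Proof.
  intros Ha Hb Hx. pose proof (c_pos i n).
  unfold f_os, Lam, Rpower. rewrite ln_div by lra.
  set (u := (INR i * beta - 1) * (ln x - ln a)).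
  set (w := (INR n + 1) * ln (1 + exp (beta * (ln x - ln a)))).
  replace (ln (c_coef i n) + ln beta + u - ln a - w) with
    (ln (c_coef i n) + ln beta + u + - ln a + - w) by ring.
  rewrite !exp_plus, !exp_Ropp, !exp_ln by lra.
  field. split. apply Rgt_not_eq, exp_pos. lra.
Qed.

Lemma score_eq n i alpha beta x : 0 < alpha -> 0 < beta -> 0 < x ->
  score n i alpha beta x =
  beta / alpha * (- INR i + (INR n + 1) * (exp (beta * (ln x - ln alpha)) / (1 + exp (beta * (ln x - ln alpha))))).
Proof.
  intros Ha Hb Hx. unfold score.
  rewrite (Derive_ext_loc _ (fun a => Lam n i a beta x)).
  2:{ exists (mkposreal alpha Ha). intros a Hab. apply ballR' in Hab. simpl in Hab.
      assert (0 < a). { apply Rabs_def2 in Hab. lra. }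
      rewrite f_os_exp by lra. apply ln_exp. }
  apply is_derive_unique. unfold Lam. auto_derive.
  { pose proof (exp_pos (beta * (ln x + - ln alpha))). repeat split; lra. }
  replace (ln x + - ln alpha) with (ln x - ln alpha) by ring. field. pose proof (exp_pos (beta * (ln x - ln alpha))). lra.
Qed.


Definition Aexp i beta tau := (INR i * tau * beta + INR i * beta - tau) / beta.
Definition Bexp n i beta tau :=
  (INR (n - i + 1) * tau * beta + INR (n - i + 1) * beta + tau) / beta.
Definition Cc n i alpha beta tau := Rpower (c_coef i n * beta / alpha) (tau + 1).
Definition Ex alpha beta x := exp (beta * (ln x - ln alpha)).
Definition psi alpha beta x := / (1 + Ex alpha beta x).
Definition dpsi alpha beta x := - beta * Ex alpha beta x / (x * (1 + Ex alpha beta x) ^ 2).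
Definition K1 n i alpha beta tau := Cc n i alpha beta tau * tau / (beta * (tau + 1)).
Definition K2 n i alpha beta tau := - Cc n i alpha beta tau / (tau + 1).
Definition gfun n i alpha beta tau s :=
  vb (Bexp n i beta tau) (Aexp i beta tau) s *
  (K1 n i alpha beta tau + K2 n i alpha beta tau *
     (Bexp n i beta tau * (1 - s) - Aexp i beta tau * s)).

Lemma INR_nmi n i : (i <= n)%nat -> INR (n - i + 1) = INR n - INR i + 1.
Proof. intros H. rewrite plus_INR, minus_INR by auto. simpl. ring. Qed.

Lemma pointwise n i alpha beta tau x : (i <= n)%nat ->
  0 < alpha -> 0 < beta -> 0 <= tau -> 0 < x ->
  xi_integrand n i alpha beta tau x =
  dpsi alpha beta x * gfun n i alpha beta tau (psi alpha beta x).
Proof.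
  intros Hin Ha Hb Ht Hx. pose proof (c_pos i n) as Hc.
  unfold xi_integrand. rewrite score_eq, f_os_exp by auto.
  unfold Rpower at 1. rewrite ln_exp.
  unfold gfun, dpsi, psi, K1, K2, Cc, vb, Ex, Lam, Aexp, Bexp. rewrite INR_nmi by auto.
  unfold Rpower.
  assert (Hcb : 0 < c_coef i n * beta) by (apply Rmult_lt_0_compat; lra).
  rewrite (ln_div _ _ Hcb Ha), (ln_mult _ _ Hc Hb).
  set (L := ln x - ln alpha).
  assert (HxL : x = exp L * alpha).
  { unfold L. unfold Rminus. rewrite exp_plus, exp_Ropp, !exp_ln by lra. field. lra. }
  set (E := exp (beta * L)).
  assert (HE : 0 < E) by apply exp_pos.
  rewrite ln_Rinv by lra.
  replace (1 - / (1 + E)) with (E / (1 + E)) by (field; lra).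
  rewrite ln_div by lra.
  assert (HlnE : ln E = beta * L) by (unfold E; apply ln_exp). rewrite HlnE.
  set (l := ln (1 + E)).
  assert (Hl : exp l = 1 + E) by (apply exp_ln; lra).
  rewrite HxL.
  set (A := (INR i * tau * beta + INR i * beta - tau) / beta).
  set (B := ((INR n - INR i + 1) * tau * beta + (INR n - INR i + 1) * beta + tau) / beta).
  set (e0 := (tau + 1) * (ln (c_coef i n) + ln beta - ln alpha)).
  set (e1 := (B - 1) * - l).
  set (e2 := (A - 1) * (beta * L - l)).
  assert (key : exp ((tau + 1) * (ln (c_coef i n) + ln beta + (INR i * beta - 1) * L - ln alpha -
      (INR n + 1) * l)) = exp e0 * E * exp e1 * exp e2 / (exp L * ((1 + E) * (1 + E)))).
  { rewrite <- Hl. unfold E.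
    transitivity (exp (e0 + beta * L + e1 + e2 + - L + - l + - l)).
    { f_equal. unfold e0, e1, e2, A, B. field. lra. }
    rewrite !exp_plus, !exp_Ropp. field.
    split; apply Rgt_not_eq, exp_pos. }
  rewrite key. unfold A, B. clearbody e0 e1 e2 l E L. field.
  repeat split; try lra. apply Rgt_not_eq, exp_pos.
Qed.


Lemma psi_deriv alpha beta x : 0 < alpha -> 0 < x ->
  is_derive (psi alpha beta) x (dpsi alpha beta x).
Proof.
  intros Ha Hx. unfold psi, dpsi, Ex.
  pose proof (exp_pos (beta * (ln x - ln alpha))).
  auto_derive.
  { replace (ln x + - ln alpha) with (ln x - ln alpha) by ring. repeat split; lra. }
  replace (ln x + - ln alpha) with (ln x - ln alpha) by ring. field. lra.
Qed.

Lemma dpsi_cont alpha beta x : 0 < alpha -> 0 < x -> continuous (dpsi alpha beta) x.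
Proof.
  intros Ha Hx. apply (@ex_derive_continuous R_AbsRing R_NormedModule).
  unfold dpsi, Ex. pose proof (exp_pos (beta * (ln x - ln alpha))).
  auto_derive. replace (ln x + - ln alpha) with (ln x - ln alpha) by ring.
  repeat split; try lra. apply Rgt_not_eq. apply Rmult_lt_0_compat. lra.
  apply Rmult_lt_0_compat; lra.
Qed.

Lemma psi_range alpha beta x : 0 < psi alpha beta x < 1.
Proof.
  unfold psi, Ex. pose proof (exp_pos (beta * (ln x - ln alpha))). split.
  apply Rinv_0_lt_compat. lra.
  rewrite <- Rinv_1. apply Rinv_lt_contravar; lra.
Qed.

Lemma gfun_cont n i alpha beta tau s : 0 < s < 1 -> continuous (gfun n i alpha beta tau) s.
Proof.
  intros Hs. apply (@ex_derive_continuous R_AbsRing R_NormedModule).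
  unfold gfun, vb, Rpower. auto_derive. lra.
Qed.

Lemma s_integral n i alpha beta tau s1 s2 : 0 < s1 < 1 -> 0 < s2 < 1 ->
  RInt (gfun n i alpha beta tau) s1 s2 =
  K1 n i alpha beta tau * RInt (vb (Bexp n i beta tau) (Aexp i beta tau)) s1 s2 +
  K2 n i alpha beta tau * (Vb (Bexp n i beta tau) (Aexp i beta tau) s2
                          - Vb (Bexp n i beta tau) (Aexp i beta tau) s1).
Proof.
  intros H1 H2.
  set (A := Aexp i beta tau). set (B := Bexp n i beta tau).
  assert (Hm : 0 < Rmin s1 s2) by (apply Rmin_glb_lt; lra).
  assert (HM : Rmax s1 s2 < 1) by (apply Rmax_lub_lt; lra).
  assert (I1 : is_RInt (vb B A) s1 s2 (RInt (vb B A) s1 s2)).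
  { apply (RInt_correct (V := R_CompleteNormedModule)). apply ex_RInt_vb; lra. }
  assert (I2 : is_RInt (fun s => vb B A s * (B * (1 - s) - A * s)) s1 s2 (minus (Vb B A s2) (Vb B A s1))).
  { apply (@is_RInt_derive R_CompleteNormedModule (Vb B A)).
    + intros x Hx. apply Vb_deriv. lra.
    + intros x Hx. apply (@ex_derive_continuous R_AbsRing R_NormedModule).
      unfold vb, Rpower. auto_derive. lra. }
  pose proof (is_RInt_plus _ _ _ _ _ _ (is_RInt_scal _ _ _ (K1 n i alpha beta tau) _ I1)
     (is_RInt_scal _ _ _ (K2 n i alpha beta tau) _ I2)) as I3.
  apply is_RInt_unique.
  eapply is_RInt_ext; [|exact I3].
  intros x _. unfold gfun, plus, scal; simpl. unfold mult; simpl. fold A B. ring.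
Qed.

Lemma x_integral n i alpha beta tau x1 x2 : (i <= n)%nat ->
  0 < alpha -> 0 < beta -> 0 <= tau -> 0 < x1 -> 0 < x2 ->
  is_RInt (xi_integrand n i alpha beta tau) x1 x2
    (RInt (gfun n i alpha beta tau) (psi alpha beta x1) (psi alpha beta x2)).
Proof.
  intros Hin Ha Hb Ht H1 H2.
  assert (Hm : 0 < Rmin x1 x2) by (apply Rmin_glb_lt; lra).
  apply (is_RInt_ext (fun y => scal (dpsi alpha beta y) (gfun n i alpha beta tau (psi alpha beta y)))).
  { intros x Hx. rewrite pointwise by (auto || lra). reflexivity. }
  apply (is_RInt_comp (V := R_CompleteNormedModule)).
  - intros x Hx. apply gfun_cont. apply psi_range.
  - intros x Hx. split. apply psi_deriv; lra. apply dpsi_cont; lra.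
Qed.


Lemma lim_scal {T} (F : (T -> Prop) -> Prop) {FF : Filter F} f a k :
  filterlim f F (locally a) -> filterlim (fun x => k * f x) F (locally (k * a)).
Proof.
  intros H. exact (filterlim_comp _ _ _ f (fun z => @scal R_Ring (NormedModule.ModuleSpace R_AbsRing R_NormedModule) k z) F (locally a) _ H (filterlim_scal_r k a)).
Qed.

Lemma lim_plus {T} (F : (T -> Prop) -> Prop) {FF : Filter F} f g a b :
  filterlim f F (locally a) -> filterlim g F (locally b) ->
  filterlim (fun x => f x + g x) F (locally (a + b)).
Proof.
  intros H1 H2.
  exact (filterlim_comp_2 f g (fun u v => @plus (NormedModule.AbelianMonoid R_AbsRing R_NormedModule) u v) H1 H2 (filterlim_plus a b)).
Qed.

Lemma lim_comb {T} (F : (T -> Prop) -> Prop) {FF : Filter F} f g h a b c k1 k2 :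
  filterlim f F (locally a) -> filterlim g F (locally b) -> filterlim h F (locally c) ->
  filterlim (fun x => k1 * (- f x) + k2 * (g x - h x)) F (locally (k1 * (- a) + k2 * (b - c))).
Proof.
  intros Hf Hg Hh.
  apply (@lim_plus T F FF).
  - replace (k1 * - a) with ((- k1) * a) by ring.
    refine (filterlim_ext (fun x => (- k1) * f x) _ _ _). intros; ring. apply (@lim_scal T F FF); auto.
  - apply (@lim_scal T F FF). unfold Rminus. apply (@lim_plus T F FF); auto.
    replace (- c) with (-1 * c) by ring.
    refine (filterlim_ext (fun x => -1 * h x) _ _ _). intros; ring. apply (@lim_scal T F FF); auto.
Qed.

Lemma psi_lim_inf alpha beta : 0 < alpha -> 0 < beta ->
  filterlim (psi alpha beta) (Rbar_locally p_infty) (at_right 0).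
Proof.
  intros Ha Hb P [eps Heps].
  assert (He : 0 < eps) by apply cond_pos.
  exists (exp (ln alpha + ln (/ eps) / beta)). intros x Hx.
  assert (Hx0 : 0 < x) by (pose proof (exp_pos (ln alpha + ln (/ eps) / beta)); lra).
  pose proof (psi_range alpha beta x) as Hr.
  apply Heps; [|lra]. apply ballR. rewrite Rminus_0_r, Rabs_pos_eq by lra.
  apply ln_increasing in Hx; [|apply exp_pos]. rewrite ln_exp in Hx.
  assert (H1 : ln (/ eps) < beta * (ln x - ln alpha)).
  { apply Rmult_lt_compat_l with (r := beta) in Hx; [|lra].
    replace (beta * (ln alpha + ln (/ eps) / beta)) with (beta * ln alpha + ln (/ eps)) in Hx by (field; lra).
    lra. }
  apply exp_increasing in H1. rewrite exp_ln in H1 by (apply Rinv_0_lt_compat; lra).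
  unfold psi, Ex. rewrite <- (Rinv_inv eps).
  apply Rinv_lt_contravar.
  - apply Rmult_lt_0_compat. apply Rinv_0_lt_compat; lra. pose proof (exp_pos (beta * (ln x - ln alpha))); lra.
  - lra.
Qed.

Lemma psi_lim_0 alpha beta : 0 < alpha -> 0 < beta ->
  filterlim (psi alpha beta) (at_right 0) (at_left 1).
Proof.
  intros Ha Hb P [eps Heps].
  assert (He : 0 < eps) by apply cond_pos.
  exists (mkposreal (exp (ln alpha + ln eps / beta)) (exp_pos _)). intros x Hx Hx0.
  apply ballR' in Hx. simpl in Hx. rewrite Rminus_0_r, Rabs_pos_eq in Hx by lra.
  pose proof (psi_range alpha beta x) as Hr.
  apply Heps; [|lra]. apply ballR. rewrite Rabs_minus_sym, Rabs_pos_eq by lra.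
  apply ln_increasing in Hx; [|lra]. rewrite ln_exp in Hx.
  assert (H1 : beta * (ln x - ln alpha) < ln eps).
  { apply Rmult_lt_compat_l with (r := beta) in Hx; [|lra].
    replace (beta * (ln alpha + ln eps / beta)) with (beta * ln alpha + ln eps) in Hx by (field; lra).
    lra. }
  apply exp_increasing in H1. rewrite exp_ln in H1 by lra.
  unfold psi, Ex in *. set (E := exp (beta * (ln x - ln alpha))) in *.
  assert (0 < E) by apply exp_pos.
  replace (1 - / (1 + E)) with (E / (1 + E)) by (field; lra).
  apply Rle_lt_trans with E; [|lra].
  unfold Rdiv. apply Rle_trans with (E * 1); [|lra]. apply Rmult_le_compat_l. lra.
  rewrite <- Rinv_1. apply Rinv_le_contravar; lra.
Qed.


Theorem theorem5 (n i : nat) (alpha beta tau : R) :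
  (1 <= n)%nat -> (1 <= i)%nat -> (i <= n)%nat ->
  0 < alpha -> 0 < beta -> 0 <= tau ->
  INR i * beta * (tau + 1) > tau ->
  is_RInt_gen (xi_integrand n i alpha beta tau) (at_right 0) (Rbar_locally p_infty)
    (Rpower (c_coef i n) (tau + 1) * Rpower (beta / alpha) (tau + 1)
     * Beta ((INR (n - i + 1) * tau * beta + INR (n - i + 1) * beta + tau) / beta)
            ((INR i * tau * beta + INR i * beta - tau) / beta)
     * (- tau / (beta + tau * beta)))
  /\ K n i alpha beta tau = J n i alpha beta (2 * tau) - (xi n i alpha beta tau) ^ 2.
Proof.
  intros Hn Hi Hin Ha Hb Ht Hcond.
  split; [|reflexivity].
  change (Beta ((INR (n - i + 1) * tau * beta + INR (n - i + 1) * beta + tau) / beta)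
            ((INR i * tau * beta + INR i * beta - tau) / beta))
    with (Beta (Bexp n i beta tau) (Aexp i beta tau)).
  assert (HA : 0 < Aexp i beta tau).
  { unfold Aexp. apply Rdiv_lt_0_compat; [|lra].
    assert (INR i * beta * (tau + 1) = INR i * tau * beta + INR i * beta) by ring. lra. }
  assert (HB : 0 < Bexp n i beta tau).
  { unfold Bexp. rewrite INR_nmi by auto.
    pose proof (le_INR _ _ Hin). apply Rdiv_lt_0_compat; [|lra].
    assert (0 <= (INR n - INR i + 1) * tau * beta) by (apply Rmult_le_pos; [apply Rmult_le_pos|]; lra).
    assert (0 < (INR n - INR i + 1) * beta) by (apply Rmult_lt_0_compat; lra). lra. }
  set (A := Aexp i beta tau) in *. set (B := Bexp n i beta tau) in *.
  pose proof (c_pos i n) as Hc.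
  replace (Rpower (c_coef i n) (tau + 1) * Rpower (beta / alpha) (tau + 1) * Beta B A *
     (- tau / (beta + tau * beta)))
    with (K1 n i alpha beta tau * (- Beta B A) + K2 n i alpha beta tau * (0 - 0)).
  2:{ unfold K1, K2, Cc.
      rewrite (Rpower_mult_distr (c_coef i n) (beta / alpha) (tau + 1)) by
        (exact Hc || (apply Rdiv_lt_0_compat; lra)).
      replace (c_coef i n * (beta / alpha)) with (c_coef i n * beta / alpha) by (field; lra).
      field. repeat split; nra. }
  unfold is_RInt_gen.
  refine (filterlimi_lim_ext_loc
    (fun ab => RInt (gfun n i alpha beta tau) (psi alpha beta (fst ab)) (psi alpha beta (snd ab))) _ _ _).
  - apply Filter_prod with (Q := fun a => 0 < a) (R := fun b => 0 < b).
    + exists (mkposreal 1 ltac:(lra)). intros; assumption.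
    + exists 0. intros; assumption.
    + intros x y Hx Hy. simpl. apply x_integral; auto.
  - refine (filterlim_ext (fun ab => K1 n i alpha beta tau * (- RInt (vb B A) (psi alpha beta (snd ab)) (psi alpha beta (fst ab)))
       + K2 n i alpha beta tau * (Vb B A (psi alpha beta (snd ab)) - Vb B A (psi alpha beta (fst ab)))) _ _ _).
    + intros [a b]. simpl. rewrite s_integral by apply psi_range. fold A B.
      rewrite <- (opp_RInt_swap (V := R_CompleteNormedModule) (vb B A) (psi alpha beta b) (psi alpha beta a)).
      reflexivity.
      apply ex_RInt_vb; apply psi_range.
    + refine (lim_comb _ _ _ _ _ _ _ _ _ _ _ _).
      * pose proof (filterlim_pair _ _
          (filterlim_comp _ _ _ snd (psi alpha beta) _ _ _ filterlim_snd (psi_lim_inf alpha beta Ha Hb))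
          (filterlim_comp _ _ _ fst (psi alpha beta) _ _ _ filterlim_fst (psi_lim_0 alpha beta Ha Hb)))
          as Hpair.
        exact (filterlim_comp _ _ _ _ (fun st => RInt (vb B A) (fst st) (snd st)) _ _ _ Hpair (beta_lim B A HB HA)).
      * exact (filterlim_comp _ _ _ _ (Vb B A) _ _ _
           (filterlim_comp _ _ _ snd (psi alpha beta) _ _ _ filterlim_snd (psi_lim_inf alpha beta Ha Hb))
           (Vb_lim0 B A HB HA)).
      * exact (filterlim_comp _ _ _ _ (Vb B A) _ _ _
           (filterlim_comp _ _ _ fst (psi alpha beta) _ _ _ filterlim_fst (psi_lim_0 alpha beta Ha Hb))
           (Vb_lim1 B A HB HA)).
Qed.
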